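(* Let $l,m,N$ be positive integers with $m>l$, let $\boldsymbol{\sigma}\in\mathrm{ir}(l)$, and assume $m>\mathcal{L}$. Then there is a decoder $\mathcal{D}_{\boldsymbol\sigma}$ such that for every codeword $\mathbf{x}=B_1\boldsymbol\sigma B_2\boldsymbol\sigma\cdots\boldsymbol\sigma B_N\in\mathcal{C}_{\boldsymbol\sigma}$ and every $\mathbf{y}\in R(D^{*,\le 1}(\mathbf{x}))$, the output $\mathcal{D}_{\boldsymbol\sigma}(\mathbf{y})$ is one of the following: (i) a string $B'_1\boldsymbol\sigma B'_2\boldsymbol\sigma\cdots\boldsymbol\sigma B'_N$ with all $|B'_i|=m$ and $B'_i\neq B_i$ for at most two indices $i$; or (ii) a list of blocks $B'_1,\dots,B'_N$ together with a set $E\subseteq[N]$ of at most four indices marked as erased, such that $B'_i=B_i$ for all $i\notin E$.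
   Context: $\Sigma_q=\{0,\dots,q-1\}$, $q\ge3$; $[n]=\{1,\dots,n\}$. A tandem duplication of length $k$ transforms $\mathbf{u}\mathbf{v}\mathbf{w}$ with $|\mathbf{v}|=k$ into $\mathbf{u}\mathbf{v}\mathbf{v}\mathbf{w}$; a $\le3$-TD is one of length $1,2$ or $3$. $D^*(\mathbf{x})$ is the set of strings obtainable from $\mathbf{x}$ by finitely many (possibly zero) $\le3$-TDs. A string is irreducible if it has no substring $\mathbf{a}\mathbf{a}$ with $1\le|\mathbf{a}|\le3$; $\mathrm{ir}(n)$ is the set of irreducible strings of length $n$ over $\Sigma_q$. $R(\mathbf{x})$ denotes the unique irreducible $\mathbf{r}$ with $\mathbf{x}\in D^*(\mathbf{r})$, and $R(S)=\{R(\mathbf{y}):\mathbf{y}\in S\}$ for a set $S$. A substitution replaces one symbol by a different symbol of $\Sigma_q$. $D^{*,1}(\mathbf{x})$ is the set of strings obtainable from $\mathbf{x}$ by any number of $\le3$-TDs and exactly one substitution in any order, and $D^{*,\le1}(\mathbf{x})=D^*(\mathbf{x})\cup D^{*,1}(\mathbf{x})$. $\mathcal{L}$ is the smallest integer such that for every alphabet, every $\mathbf{x}$ and every $\mathbf{x}''\in D^{*,1}(\mathbf{x})$, $R(\mathbf{x}'')$ can be obtained from $R(\mathbf{x})$ by deleting a substring of length at most $\mathcal{L}$ and inserting a substring of length at most $\mathcal{L}$ in the same position (it is known that $\mathcal{L}\le17$). The code $\mathcal{C}_{\boldsymbol\sigma}$ (depending on $l,m,N,\boldsymbol\sigma$)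 consists of all strings $\mathbf{x}=B_1\boldsymbol\sigma B_2\boldsymbol\sigma\cdots\boldsymbol\sigma B_N$ such that $\mathbf{x}\in\mathrm{ir}(N(m+l)-l)$, each $B_i\in\mathrm{ir}(m)$, and for every $i\in[N]$ the string $\boldsymbol\sigma B_i\boldsymbol\sigma$ contains exactly two occurrences of $\boldsymbol\sigma$ (so $\mathbf{x}$ contains exactly $N-1$ occurrences of $\boldsymbol\sigma$). The blocks $B_i$ are called message blocks and $\boldsymbol\sigma$ the marker. *)

(* Defs.v *)
From mathcomp Require Import all_boot.
Set Implicit Arguments. Unset Strict Implicit. Unset Printing Implicit Defensive.

Section Strings.
Variable q : nat.
Definition word := seq 'I_q.

Definition tdup (k : nat) (x y : word) : Prop :=
  exists u v w : word, size v = k /\ x = u ++ v ++ w /\ y = u ++ v ++ v ++ w.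

Definition td3 (x y : word) : Prop := exists k, 1 <= k <= 3 /\ tdup k x y.

Inductive Dstar : word -> word -> Prop :=
| Dstar_refl x : Dstar x x
| Dstar_step x y z : td3 x y -> Dstar y z -> Dstar x z.

Definition irreducible (x : word) : Prop :=
  ~ (exists u a w : word, 1 <= size a <= 3 /\ x = u ++ a ++ a ++ w).

Definition ir (n : nat) (x : word) : Prop := irreducible x /\ size x = n.

(* r = R(x): r is the (unique) irreducible string with x \in D^*(r) *)
Definition IsRoot (r x : word) : Prop := irreducible r /\ Dstar r x.

Definition subst1 (x y : word) : Prop :=
  exists (u w : word) (a b : 'I_q), a != b /\ x = u ++ a :: w /\ y = u ++ b :: w.

Definition Dstar1 (x y : word) : Prop :=
  exists x1 x2, Dstar x x1 /\ subst1 x1 x2 /\ Dstar x2 y.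

Definition Dstar_le1 (x y : word) : Prop := Dstar x y \/ Dstar1 x y.

Definition in_RDle1 (x y : word) : Prop := exists z, Dstar_le1 x z /\ IsRoot y z.

Definition join (s : word) (Bs : seq word) : word :=
  match Bs with
  | [::] => [::]
  | B :: Bs' => B ++ flatten [seq s ++ B' | B' <- Bs']
  end.

Definition occ (s t : word) : nat :=
  count (fun i => take (size s) (drop i t) == s) (iota 0 (size t).+1).

Definition codeword (l m N : nat) (s : word) (Bs : seq word) : Prop :=
  [/\ size Bs = N,
      forall B, B \in Bs -> ir m B,
      ir (N * (m + l) - l) (join s Bs)
    & forall B, B \in Bs -> occ s (s ++ B ++ s) = 2].
End Strings.

Definition L_good (L : nat) : Prop :=
  forall (q : nat) (x x'' r r'' : word q),
    Dstar1 x x'' -> IsRoot r x -> IsRoot r'' x'' ->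
    exists u d d' w : word q,
      size d <= L /\ size d' <= L /\ r = u ++ d ++ w /\ r'' = u ++ d' ++ w.

Definition is_calL (L : nat) : Prop :=
  L_good L /\ forall L', L_good L' -> L <= L'.

(* Main.v *)
Require Import Defs.
From mathcomp Require Import all_boot zify.
Set Implicit Arguments. Unset Strict Implicit. Unset Printing Implicit Defensive.

Lemma takedrop_cat (T : Type) (X Y : seq T) t k :
  t + k <= size X -> take k (drop t (X ++ Y)) = take k (drop t X).
Proof.
move=> h; rewrite drop_cat; case: ltnP => h2; last first.
  have hk : k = 0 by lia.
  by rewrite hk !take0.
by rewrite takel_cat // size_drop; lia.
Qed.

Lemma F1a (T : Type) (u d d' w : seq T) p k :
  p + k <= size u -> take k (drop p (u ++ d ++ w)) = take k (drop p (u ++ d' ++ w)).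
Proof. by move=> h; rewrite !takedrop_cat. Qed.

Lemma F1b (T : Type) (u d d' w : seq T) p :
  size u + size d <= p -> drop p (u ++ d ++ w) = drop (p + size d' - size d) (u ++ d' ++ w).
Proof.
move=> h; rewrite !catA !drop_cat !size_cat.
case: ltnP => h1; first lia. case: ltnP => h2; first lia.
congr drop; lia.
Qed.

Section J.
Variable q : nat.
Implicit Types s : word q.

Lemma joinS s B B' rest : join s (B :: B' :: rest) = B ++ s ++ join s (B' :: rest).
Proof. by rewrite /join /= !catA. Qed.

Lemma D1 s m (Bs : seq (word q)) i : (forall B, B \in Bs -> size B = m) -> i < size Bs ->
  exists P R, size P = i * (m + size s) /\ join s Bs = P ++ nth [::] Bs i ++ R.
Proof.
elim: i Bs => [|i IH] [|B0 [|B1 rest]] //= hs hi.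
- by exists [::], [::]; rewrite cats0.
- by exists [::], (flatten [seq s ++ B' | B' <- B1 :: rest]).
- have [P [R [h1 h2]]] := IH (B1 :: rest) (fun B hB => hs B (@mem_behead _ (B0 :: B1 :: rest) _ hB)) hi.
  exists (B0 ++ s ++ P), R; split.
  + have := hs B0 (mem_head _ _); rewrite !size_cat h1 mulSn; lia.
  + by rewrite -catA -(joinS s B0 B1 rest) joinS h2 !catA.
Qed.

Lemma D2 s m (Bs : seq (word q)) j : (forall B, B \in Bs -> size B = m) -> j.+1 < size Bs ->
  exists P R, size P = j * (m + size s) /\
    join s Bs = P ++ nth [::] Bs j ++ s ++ nth [::] Bs j.+1 ++ R.
Proof.
elim: j Bs => [|j IH] [|B0 [|B1 rest]] //= hs hi.
- by exists [::], (flatten [seq s ++ B' | B' <- rest]); rewrite /= !catA.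
- case: rest hi hs => [//|B2 rest] hi hs.
  have [P [R [h1 h2]]] := IH (B1 :: B2 :: rest) (fun B hB => hs B (@mem_behead _ (B0 :: B1 :: B2 :: rest) _ hB)) hi.
  exists (B0 ++ s ++ P), R; split.
  + have := hs B0 (mem_head _ _); rewrite !size_cat h1 mulSn; lia.
  + by rewrite -catA -(joinS s B0 B1 (B2 :: rest)) joinS h2 !catA.
Qed.

Lemma occ3 (s B : word q) t : 0 < t < size s + size B ->
  take (size s) (drop t (s ++ B ++ s)) = s -> 3 <= occ s (s ++ B ++ s).
Proof.
move=> ht ho; rewrite /occ -size_filter.
have -> : 3 = size [:: 0; t; size s + size B] by [].
apply: uniq_leq_size.
  rewrite /= !inE; apply/andP; split; first by apply/norP; split; apply/eqP; lia.
  by rewrite andbT; apply/eqP; lia.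
move=> i; rewrite !inE mem_filter mem_iota !size_cat => /or3P [] /eqP ->.
- by rewrite drop0 take_size_cat //= eqxx; lia.
- by rewrite ho eqxx /=; lia.
- rewrite catA drop_size_cat ?size_cat // take_size eqxx /=; lia.
Qed.

Lemma F3 s m (Bs : seq (word q)) j r : (forall B, B \in Bs -> size B = m) ->
  (forall B, B \in Bs -> occ s (s ++ B ++ s) = 2) ->
  j.+1 < size Bs -> j * (m + size s) < r < j * (m + size s) + m + m -> r != j * (m + size s) + m ->
  take (size s) (drop r (join s Bs)) != s.
Proof.
move=> hs ho hj hr hne; have [P [R [h1 ->]]] := D2 s hs hj.
move: hr hne; rewrite -h1 => hr hne.
have hin : forall k, k < size Bs -> nth [::] Bs k \in Bs by move=> k hk; rewrite mem_nth.
have sz0 := hs _ (hin j (ltnW hj)); have sz1 := hs _ (hin j.+1 hj).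
have oc0 := ho _ (hin j (ltnW hj)); have oc1 := ho _ (hin j.+1 hj).
apply/eqP => heq.
rewrite drop_cat ifF in heq; last by apply/negbTE; rewrite -leqNgt; lia.
case: (ltnP r (j * (m + size s) + m)) => hrp; rewrite -h1 in hrp.
- have : 3 <= occ s (s ++ nth [::] Bs j ++ s); last by rewrite oc0.
  apply: (occ3 (t := size s + (r - size P))); first by rewrite sz0; lia.
  rewrite catA takedrop_cat in heq; last by rewrite size_cat sz0; lia.
  by rewrite addnC -drop_drop drop_size_cat.

- have : 3 <= occ s (s ++ nth [::] Bs j.+1 ++ s); last by rewrite oc1.
  apply: (occ3 (t := r - size P - m)); first by rewrite sz1; lia.
  have e : r - size P = (r - size P - m) + m by lia.
  rewrite e -drop_drop drop_size_cat // in heq.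
  rewrite catA takedrop_cat in heq; last by rewrite size_cat sz1; lia.
  rewrite catA takedrop_cat ?heq // size_cat sz1; lia.
Qed.
End J.

Lemma map_splitcat (T1 T2 : Type) (f : T1 -> T2) x U V :
  map f x = U ++ V -> exists x1 x2, x = x1 ++ x2 /\ map f x1 = U /\ map f x2 = V.
Proof.
move=> h; exists (take (size U) x), (drop (size U) x); split; first by rewrite cat_take_drop.
by rewrite map_take map_drop h take_size_cat // drop_size_cat.
Qed.

Section Lift.
Variable q : nat.
Definition fq : 'I_q -> 'I_q.+2 := widen_ord (leq_trans (leqnSn q) (leqnSn q.+1)).
Lemma fq_inj : injective fq.
Proof. by move=> a b /(congr1 val) /= /val_inj. Qed.

Lemma lift_Dstar (e : word q.+2) (x z : word q) : Dstar x z -> Dstar (map fq x ++ e) (map fq z ++ e).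
Proof.
elim=> [y|x0 y0 z0 [k [hk [u [v [w [hv [-> ->]]]]]]] _ IH]; first exact: Dstar_refl.
apply: Dstar_step IH; exists k; split=> //.
exists (map fq u), (map fq v), (map fq w ++ e); split; first by rewrite size_map.
by rewrite !map_cat !catA.
Qed.

Lemma irr_lift (c : 'I_q.+2) (x : word q) : irreducible x -> (forall a, fq a != c) ->
  irreducible (map fq x ++ [:: c]).
Proof.
move=> hx hc [U [A [W [hA heq]]]].
case/lastP: W heq => [|W' z] heq.
- case/lastP: A hA heq => [//|A' a] hA heq.
  rewrite cats0 !cats1 -!rcons_cat in heq.
  case/rcons_inj: heq => heq ha.
  have : a \in map fq x by rewrite heq !mem_cat mem_rcons mem_head orbT.
  by case/mapP=> a0 _ e; move: (hc a0); rewrite -e ha eqxx.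
- rewrite cats1 !catA -rcons_cat in heq; case/rcons_inj: heq => heq _.
  rewrite -!catA in heq.
  have [u [r1 [hx1 [hu hr1]]]] := map_splitcat heq.
  have [a1 [r2 [hx2 [ha1 hr2]]]] := map_splitcat hr1.
  have [a2 [w [hx3 [ha2 hw]]]] := map_splitcat hr2.
  apply: hx; exists u, a1, w; split; first by rewrite -ha1 size_map in hA.
  have e : a1 = a2 by apply: (inj_map fq_inj); rewrite ha1 ha2.
  by rewrite hx1 hx2 hx3 e.
Qed.

Lemma near_Dstar L (hL : L_good L) (x y z : word q) : irreducible x -> Dstar x z -> IsRoot y z ->
  exists u d d' w : word q, size d <= L /\ size d' <= L /\ x = u ++ d ++ w /\ y = u ++ d' ++ w.
Proof.
move=> hx hxz [hy hyz].
pose c : 'I_q.+2 := @Ordinal q.+2 q (leq_trans (ltnSn q) (leqnSn q.+1)).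
pose d : 'I_q.+2 := @Ordinal q.+2 q.+1 (ltnSn q.+1).
have fc : forall a, fq a != c by move=> a; apply/eqP=> /(congr1 val) /=; have := ltn_ord a; lia.
have fd : forall a, fq a != d by move=> a; apply/eqP=> /(congr1 val) /=; have := ltn_ord a; lia.
have cd : c != d by apply/eqP => /(congr1 val) /=; lia.
have H1 : Dstar1 (map fq x ++ [:: c]) (map fq z ++ [:: d]).
  exists (map fq z ++ [:: c]), (map fq z ++ [:: d]); split; first exact: lift_Dstar.
  split; last exact: Dstar_refl.
  by exists (map fq z), [::], c, d.
have [U [D [D' [W [hD [hD' [e1 e2]]]]]]] :=
  hL _ _ _ _ _ H1 (conj (irr_lift hx fc) (Dstar_refl _)) (conj (irr_lift hy fd) (lift_Dstar _ hyz)).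
case/lastP: W e1 e2 => [|W' z0] e1 e2; last first.
  rewrite !cats1 catA -rcons_cat in e1; rewrite !cats1 catA -rcons_cat in e2.
  case/rcons_inj: e1 => _ h1; case/rcons_inj: e2 => _ h2.
  by rewrite h1 h2 eqxx in cd.
rewrite ?cats0 in e1 e2.
have s1 : size x + 1 = size U + size D.
  have := congr1 size e1; rewrite !size_cat size_map /=; lia.
have s2 : size y + 1 = size U + size D'.
  have := congr1 size e2; rewrite !size_cat size_map /=; lia.
pose k := minn (size U) (minn (size x) (size y)).
have tk : forall (t : word q) e E, k <= size t -> map fq t ++ [:: e] = U ++ E ->
    map fq (take k t) = take k U.
  move=> t e E st et; rewrite map_take -(@takel_cat k _ _ [:: e]); last by rewrite size_map.
  by rewrite et takel_cat // /k; lia.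
have kx : k <= size x by rewrite /k; lia.
have ky : k <= size y by rewrite /k; lia.
have ek : take k x = take k y by apply: (inj_map fq_inj); rewrite (tk _ _ _ kx e1) (tk _ _ _ ky e2).
exists (take k x), (drop k x), (drop k y), [::].
rewrite !cats0 !size_drop {2}ek !cat_take_drop; split; [rewrite /k; lia | split; [rewrite /k; lia | by []]].
Qed.
End Lift.

Lemma near q L (hL : L_good L) (x y : word q) : irreducible x -> in_RDle1 x y ->
  exists u d d' w : word q, size d <= L /\ size d' <= L /\ x = u ++ d ++ w /\ y = u ++ d' ++ w.
Proof.
move=> hx [z [[hxz|h1] hr]]; first by apply: (near_Dstar hL hx hxz hr).
exact: (hL q x z x y h1 (conj hx (Dstar_refl x)) hr).
Qed.

Lemma count_le2 (P : pred nat) N Q : (forall i, i < N -> P i -> i = Q \/ i = Q.+1) ->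
  count P (iota 0 N) <= 2.
Proof.
move=> h.
rewrite (@eq_in_count _ _ (fun i => P i && ((i == Q) || (i == Q.+1)))); last first.
  move=> i; rewrite mem_iota add0n => /andP [_ hi] /=.
  by case hP: (P i); rewrite ?andbT //= ; case: (h i hi hP) => ->; rewrite eqxx ?orbT.
apply: (leq_trans (sub_count (a2 := predU (pred1 Q) (pred1 Q.+1)) _ _)).
  by move=> i /andP [_].
apply: (leq_trans (leq_addr (count (predI (pred1 Q) (pred1 Q.+1)) (iota 0 N)) _)).
rewrite count_predUI.
have u1 := count_uniq_mem Q (iota_uniq 0 N); have u2 := count_uniq_mem Q.+1 (iota_uniq 0 N).
rewrite /= in u1 u2.
have : count (pred1 Q) (iota 0 N) <= 1 by rewrite u1 leq_b1.
have : count (pred1 Q.+1) (iota 0 N) <= 1 by rewrite u2 leq_b1.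
lia.
Qed.

Lemma card_valset N (s : seq nat) : #|[set i : 'I_N | val i \in s]| <= size s.
Proof.
rewrite cardsE cardE -(size_map val); apply: uniq_leq_size.
  by rewrite map_inj_uniq ?enum_uniq //; exact: val_inj.
by move=> k /mapP [i]; rewrite mem_enum => hi ->.
Qed.

Definition Lcol q m K (y : word q) i := take m (drop (i * K) y).
Definition Rcol q m K n (y : word q) i := take m (drop (i * K + size y - n) y).
Definition mkA q m K N (s y : word q) :=
  find (fun j => take (size s) (drop (j * K + m) y) != s) (iota 0 N.-1).

Definition decoder q l m N (s : word q) (y : word q) : (word q + (seq (word q) * {set 'I_N}))%type :=
  let K := m + l in let n := N * K - l in let a := mkA m K N s y in
  if size y == n then inl (join s (map (Lcol m K y) (iota 0 N)))
  else inr (map (fun i => if i.+1 < a then Lcol m K y i else Rcol m K n y i) (iota 0 N),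
            [set i : 'I_N | val i \in [:: a.-1; a; a.+1]]).

Theorem theorem2 (q l m N : nat) (sigma : word q) :
  3 <= q -> 0 < l -> 0 < m -> 0 < N -> l < m -> ir l sigma ->
  (exists L, is_calL L /\ L < m) ->
  exists dec : word q -> (word q + (seq (word q) * {set 'I_N}))%type,
    forall Bs : seq (word q), codeword l m N sigma Bs ->
    forall y : word q, in_RDle1 (join sigma Bs) y ->
      (exists Bs' : seq (word q),
          [/\ dec y = inl (join sigma Bs'),
              size Bs' = N,
              forall B', B' \in Bs' -> size B' = m
            & count (fun i => nth [::] Bs' i != nth [::] Bs i) (iota 0 N) <= 2])
      \/
      (exists (Bs' : seq (word q)) (E : {set 'I_N}),
          [/\ dec y = inr (Bs', E),
              size Bs' = N,
              #|E| <= 4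
            & forall i : 'I_N, i \notin E -> nth [::] Bs' i = nth [::] Bs i]).
Proof.
move=> hq hl hm hN hlm [hsi hsl] [L [[hL _] hLm]].
exists (decoder l m N sigma).
move=> Bs [hsz hBs [hxi hxs] hocc] y hy.
have hBsz : forall B, B \in Bs -> size B = m by move=> B /hBs [].
have [u [d [d' [w [hd [hd' [ex ey]]]]]]] := near hL hxi hy.
subst l.
set K := m + size sigma in hxs *.
set x := join sigma Bs in hxs ex hxi *.
have blk : forall i, i < N -> take m (drop (i * K) x) = nth [::] Bs i.
  move=> i hi; rewrite -hsz in hi; have [P [R [h1 hx]]] := D1 sigma hBsz hi.
  by rewrite /x hx (drop_size_cat _ h1) take_size_cat // hBsz // mem_nth.
have mk : forall j, j.+1 < N -> take (size sigma) (drop (j * K + m) x) = sigma.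
  move=> j hj; rewrite -hsz in hj; have [P [R [h1 hx]]] := D2 sigma hBsz hj.
  rewrite /x hx addnC -drop_drop (drop_size_cat _ h1) drop_size_cat ?take_size_cat //.
  by rewrite hBsz // mem_nth // ltnW.
have sx : size x = size u + size d + size w by rewrite ex !size_cat addnA.
have sy : size y = size u + size d' + size w by rewrite ey !size_cat addnA.
rewrite /decoder -/K.
case: eqP => hyn.
-
  left; exists (map (Lcol m K y) (iota 0 N)); split => //.
  + by rewrite size_map size_iota.
  + move=> B' /mapP [i]; rewrite mem_iota add0n => /andP [_ hi] ->.
    have : i.+1 * K <= N * K by rewrite leq_mul2r hi orbT.
    rewrite mulSn => hk.
    rewrite /Lcol size_takel // size_drop hyn; rewrite /K in hk *; lia.
  + apply: (count_le2 (Q := size u %/ K)) => i hi.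
    rewrite (nth_map 0) ?size_iota // nth_iota // add0n /Lcol.
    have hK : 0 < K by rewrite /K; lia.
    have dq := divn_eq (size u) K; have mq := ltn_pmod (size u) hK.
    set Q := size u %/ K in dq mq *.
    move=> hP; case: (ltngtP i Q) => hiQ.
    * have : i.+1 * K <= Q * K by rewrite leq_mul2r hiQ orbT.
      rewrite mulSn => hiK.
      rewrite ey -(@F1a _ u d d' w) -?ex ?blk ?eqxx // in hP; rewrite /K in hiK mq dq *; lia.
    * case: (ltngtP i Q.+1) => hiQ1; first lia; last by right.
      have : Q.+2 * K <= i * K by rewrite leq_mul2r hiQ1 orbT.
      rewrite !mulSn => hiK.
      have hdd : size d = size d' by lia.
      rewrite ey (@F1b _ u d' d w) in hP; last by rewrite /K in hiK mq dq *; lia.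
      have e : i * K + size d - size d' = i * K by lia.
      by rewrite e -ex blk // eqxx in hP.
    * by left.
-
  right; set a := mkA m K N sigma y.
  eexists; eexists; split; first reflexivity.
  + by rewrite size_map size_iota.
  + exact: leq_trans (card_valset _ _) _.
  + move=> i; rewrite inE !inE => /norP [/eqP h1 /norP [/eqP h2 /eqP h3]].
    change (nat_of_ord i <> a.-1) in h1; change (nat_of_ord i <> a) in h2; change (nat_of_ord i <> a.+1) in h3.
    have hi := ltn_ord i.
    rewrite (nth_map 0) ?size_iota // nth_iota // add0n.
    have hdd : size d != size d' by apply/eqP => e; apply: hyn; lia.
    have hdm : size d < m by lia.
    have hdm' : size d' < m by lia.
    case: ifP => hia.
    *
      have haN : a <= N.-1 by rewrite /a /mkA; apply: leq_trans (find_size _ _) _; rewrite size_iota.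
      have hpres := before_find 0 hia; rewrite nth_iota ?add0n in hpres; last lia.
      move/negbFE/eqP: hpres => hpres.
      rewrite /Lcol -blk //.
      case: (leqP (i * K + m) (size u)) => hu.
        by rewrite ey ex (@F1a _ u d' d w).
      exfalso.
      have : i.+1 * K + m >= size u + size d' by rewrite mulSn /K; lia.
      move=> hp.
      rewrite ey (@F1b _ u d' d w) // -ex in hpres.
      move: hpres; apply/eqP; apply: (F3 (j := i.+1) hBsz hocc); [rewrite hsz; lia | | ].
      * rewrite mulSn -/K; apply/andP; split; lia.
      * apply/eqP; lia.
    *
      have hia2 : a.+2 <= i.
        move/negbT: hia; rewrite -leqNgt -subn1 in h1 * => hia; lia.
      have haN : a < size (iota 0 N.-1) by rewrite size_iota; lia.
      have hh : has (fun j => take (size sigma) (drop (j * K + m) y) != sigma) (iota 0 N.-1).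
        by rewrite has_find; exact: haN.
      have habs := nth_find 0 hh.
      change (is_true (take (size sigma) (drop (nth 0 (iota 0 N.-1) a * K + m) y) != sigma)) in habs.
      rewrite nth_iota ?add0n in habs; last by rewrite size_iota in haN.
      have hu : size u < a * K + m + size sigma.
        rewrite ltnNge; apply/negP => hu.
        move: habs; rewrite ey -(@F1a _ u d d' w) -?ex ?mk ?eqxx //; lia.
      have : a.+2 * K <= i * K by rewrite leq_mul2r hia2 orbT.
      rewrite !mulSn => hiK.
      rewrite /Rcol -blk //.
      have e : i * K + size y - (N * K - size sigma) = i * K + size d' - size d by lia.
      rewrite e ex ey (@F1b _ u d d' w) //.
      by rewrite /K in hiK hu *; lia.
Qed.
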